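(* Let $A$ be a subring of $\mathbb{R}$ and let $H(A)$ be as in the context. For each $r\in A$ and each $p\in\mathbb{R}$ there exists $f\in H(A)$ with the following properties: (1) $f$ is supported on $[y,\infty)$ for some $y<p$; (2) the restriction of $f$ to $(p,\infty)$ equals $t\mapsto t+r$.
   Context: For a subring $A\subseteq\mathbb{R}$, let $P_A\subseteq\mathbb{R}\cup\{\infty\}$ be the set of fixed points of hyperbolic elements (those with $|\mathrm{trace}|>2$) of $PSL_2(A)$ acting by Möbius transformations. $H(A)$ is the group of orientation-preserving homeomorphisms $f$ of $\mathbb{R}$ for which there are finitely many breakpoints $t_1<\dots<t_n$ in $P_A$ such that on each of the intervals $(-\infty,t_1]$, $[t_i,t_{i+1}]$ and $[t_n,\infty)$, $f$ agrees with a map $t\mapsto(at+b)/(ct+d)$ with $\begin{pmatrix}a&b\\c&d\end{pmatrix}\in PSL_2(A)$. *)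

(* Defs.v *)
From Stdlib Require Import Reals.
Open Scope R_scope.

Definition is_subring (A : R -> Prop) : Prop :=
  A 1 /\ (forall x y, A x -> A y -> A (x + y)) /\
  (forall x, A x -> A (- x)) /\ (forall x y, A x -> A y -> A (x * y)).

(* An element of SL_2(A) (a lift of an element of PSL_2(A)); the sign ambiguity
   is irrelevant for |trace| and for the Moebius action. *)
Definition SL2 (A : R -> Prop) (a b c d : R) : Prop :=
  A a /\ A b /\ A c /\ A d /\ a * d - b * c = 1.

Definition moebius_fixed (a b c d x : R) : Prop :=
  c * x + d <> 0 /\ (a * x + b) / (c * x + d) = x.

(* P_A intersected with R (breakpoints are real numbers). *)
Definition P_A (A : R -> Prop) (x : R) : Prop :=
  exists a b c d, SL2 A a b c d /\ Rabs (a + d) > 2 /\ moebius_fixed a b c d x.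

Definition or_pres_homeo (f : R -> R) : Prop :=
  (forall x, continuity_pt f x) /\
  (forall x y, x < y -> f x < f y) /\
  (forall y, exists x, f x = y).

Definition agrees_moebius_on (I : R -> Prop) (f : R -> R) (a b c d : R) : Prop :=
  forall x, I x -> c * x + d <> 0 /\ f x = (a * x + b) / (c * x + d).

(* The i-th piece (0 <= i <= n) determined by breakpoints t 0 < ... < t (n-1):
   (-oo, t 0], [t (i-1), t i], [t (n-1), +oo)  (all of R when n = 0). *)
Definition piece (n : nat) (t : nat -> R) (i : nat) (x : R) : Prop :=
  (i = 0%nat \/ t (i - 1)%nat <= x) /\ (i = n \/ x <= t i).

Definition in_H (A : R -> Prop) (f : R -> R) : Prop :=
  or_pres_homeo f /\
  exists (n : nat) (t : nat -> R),
    (forall i, (i + 1 < n)%nat -> t i < t (i + 1)%nat) /\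
    (forall i, (i < n)%nat -> P_A A (t i)) /\
    (forall i, (i <= n)%nat ->
       exists a b c d, SL2 A a b c d /\ agrees_moebius_on (piece n t i) f a b c d).

(* Main.v *)
Require Import Defs.
From Stdlib Require Import Reals Lra Lia ZArith.
Open Scope R_scope.

Lemma lip_cont (g : R -> R) (K : R) x0 :
  0 <= K -> (forall u v, Rabs (g u - g v) <= K * Rabs (u - v)) -> continuity_pt g x0.
Proof.
  intros HK Hg eps Heps. exists (eps / (K + 1)). split.
  - apply Rdiv_lt_0_compat; lra.
  - intros x [_ Hx]. simpl in *. unfold R_dist in *.
    eapply Rle_lt_trans. apply Hg.
    assert (0 <= Rabs (x - x0)) by apply Rabs_pos.
    assert (Rabs (x - x0) * (K+1) < eps).
    { apply (Rmult_lt_compat_r (K+1)) in Hx; [|lra].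
      unfold Rdiv in Hx. rewrite Rmult_assoc, Rinv_l in Hx; lra. }
    nra.
Qed.

Definition cl (y z x : R) := Rmax y (Rmin x z).

Lemma cl_lip y z : y <= z -> forall u v, Rabs (cl y z u - cl y z v) <= 1 * Rabs (u - v).
Proof.
  intros Hyz u v. unfold cl, Rmax, Rmin.
  repeat destruct Rle_dec; unfold Rabs; repeat destruct Rcase_abs; lra.
Qed.

Lemma cl_in y z x : y <= z -> y <= cl y z x <= z.
Proof. intros. unfold cl, Rmax, Rmin. repeat destruct Rle_dec; lra. Qed.

Lemma cl_left y z x : y <= z -> x <= y -> cl y z x = y.
Proof. intros. unfold cl, Rmax, Rmin. repeat destruct Rle_dec; lra. Qed.
Lemma cl_mid y z x : y <= x <= z -> cl y z x = x.
Proof. intros. unfold cl, Rmax, Rmin. repeat destruct Rle_dec; lra. Qed.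
Lemma cl_right y z x : y <= z -> z <= x -> cl y z x = z.
Proof. intros. unfold cl, Rmax, Rmin. repeat destruct Rle_dec; lra. Qed.

Lemma aff_cont a b x0 : continuity_pt (fun t => a * t + b) x0.
Proof.
  apply (lip_cont _ (Rabs a)). apply Rabs_pos.
  intros u v. replace (a*u+b - (a*v+b)) with (a*(u-v)) by ring.
  rewrite Rabs_mult. lra.
Qed.

Lemma sub0 A : is_subring A -> A 0.
Proof. intros (H1&Hp&Hn&Hm). replace 0 with (1 + Ropp 1) by ring. apply Hp; auto. Qed.

Lemma core (A : R -> Prop) (HA : is_subring A) r p y z a b c d :
  A r -> SL2 A a b c d -> P_A A y -> P_A A z -> y < z -> z <= p ->
  (forall t, y <= t <= z -> c*t+d > 0) ->
  (a*y+b)/(c*y+d) = y -> (a*z+b)/(c*z+d) = z + r ->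
  exists f : R -> R, in_H A f /\
    (exists y, y < p /\ forall t, t < y -> f t = t) /\
    (forall t, p < t -> f t = t + r).
Proof.
  intros Hr HM Py Pz Hyz Hzp Hden Hfy Hfz.
  set (h := fun t => (a*t+b)/(c*t+d)).
  set (f := fun x => h (cl y z x) + (x - cl y z x)).
  assert (Fl : forall x, x <= y -> f x = x).
  { intros x Hx. unfold f. rewrite cl_left by lra. unfold h. rewrite Hfy. ring. }
  assert (Fm : forall x, y <= x <= z -> f x = h x).
  { intros x Hx. unfold f. rewrite cl_mid by lra. ring. }
  assert (Fr : forall x, z <= x -> f x = x + r).
  { intros x Hx. unfold f. rewrite cl_right by lra. unfold h. rewrite Hfz. ring. }
  destruct HM as (Ha&Hb&Hc&Hd&Hdet).
  assert (hmono : forall u v, y <= u -> u < v -> v <= z -> h u < h v).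
  { intros u v H1 H2 H3. unfold h.
    assert (Du := Hden u ltac:(lra)). assert (Dv := Hden v ltac:(lra)).
    apply Rlt_0_minus.
    replace ((a*v+b)/(c*v+d) - (a*u+b)/(c*u+d)) with
      (((a*v+b)*(c*u+d) - (a*u+b)*(c*v+d))/((c*u+d)*(c*v+d))) by (field; lra).
    replace ((a*v+b)*(c*u+d) - (a*u+b)*(c*v+d)) with ((a*d-b*c)*(v-u)) by ring.
    rewrite Hdet, Rmult_1_l.
    apply Rdiv_lt_0_compat. lra. apply Rmult_lt_0_compat; lra. }
  assert (hy : h y = y) by exact Hfy.
  assert (hz : h z = z + r) by exact Hfz.
  assert (Fmono : forall x1 x2, x1 < x2 -> f x1 < f x2).
  { intros x1 x2 H12.
    destruct (Rle_dec x2 y).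
    { rewrite !Fl by lra. lra. }
    destruct (Rle_dec x1 y).
    { rewrite (Fl x1) by lra.
      destruct (Rle_dec x2 z).
      - rewrite Fm by lra. assert (h y < h x2) by (apply hmono; lra). lra.
      - rewrite Fr by lra. assert (h y < h z) by (apply hmono; lra). lra. }
    destruct (Rle_dec x1 z).
    { rewrite (Fm x1) by lra.
      destruct (Rle_dec x2 z).
      - rewrite Fm by lra. apply hmono; lra.
      - rewrite Fr by lra. destruct (Rle_dec z x1).
        + assert (x1 = z) by lra. subst x1. lra.
        + assert (h x1 < h z) by (apply hmono; lra). lra. }
    rewrite !Fr by lra. lra. }
  assert (Fcont : forall x, continuity_pt f x).
  { intros x.
    assert (C1 : continuity_pt (cl y z) x) by (apply (lip_cont _ 1); [lra | apply cl_lip; lra]).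
    assert (C2 : continuity_pt h (cl y z x)).
    { apply continuity_pt_div; try apply aff_cont.
      assert (Hc' := Hden (cl y z x) (cl_in y z x ltac:(lra))). lra. }
    assert (C3 : continuity_pt (comp h (cl y z)) x) by (apply continuity_pt_comp; auto).
    assert (C4 : continuity_pt (fun t => t - cl y z t) x).
    { apply (lip_cont _ 2). lra. intros u v.
      assert (HH := cl_lip y z ltac:(lra) u v).
      replace (u - cl y z u - (v - cl y z v)) with ((u - v) - (cl y z u - cl y z v)) by ring.
      eapply Rle_trans. apply Rabs_triang_inv2 || apply Rabs_triang. 
      rewrite Rabs_Ropp. lra. }
    exact (continuity_pt_plus _ _ x C3 C4). }
  exists f. split; [split|split].
  - split; [exact Fcont|split; [exact Fmono|]].
    intros v.
    destruct (Rle_dec v y). { exists v. apply Fl; lra. }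
    destruct (Rle_dec (z + r) v). { exists (v - r). rewrite Fr. ring. 
      assert (h y < h z) by (apply hmono; lra). lra. }
    destruct (IVT (fun x => f x - v) y z) as [x [_ Hx]].
    + intros x. apply continuity_pt_minus. apply Fcont. apply continuity_pt_const. intros u w; reflexivity.
    + lra.
    + rewrite Fl; lra.
    + rewrite Fr; lra.
    + exists x. lra.
  - exists 2%nat, (fun i => match i with O => y | _ => z end).
    split; [|split].
    + intros i Hi. assert (i = 0%nat) by lia. subst. simpl. lra.
    + intros i Hi. destruct i; auto. 
    + intros i Hi. destruct i as [|[|[|i]]]; [| | | lia].
      * exists 1, 0, 0, 1. split.
        { pose proof (sub0 A HA). destruct HA as (H1&_). unfold SL2. repeat split; auto; ring. }
        intros x [_ [H2|H2]]; [lia|]. simpl in H2. split. lra.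
        rewrite Fl by lra. field.
      * exists a, b, c, d. split. { repeat split; auto. }
        intros x [[H1|H1] [H2|H2]]; try lia. simpl in H1, H2. split.
        assert (Hc' := Hden x ltac:(lra)). lra. rewrite Fm by lra. reflexivity.
      * exists 1, r, 0, 1. split.
        { pose proof (sub0 A HA). destruct HA as (H1&_). unfold SL2. repeat split; auto; ring. }
        intros x [[H1|H1] _]; [lia|]. simpl in H1. split. lra.
        rewrite Fr by lra. field.
  - exists y. split. lra. intros t Ht. apply Fl. lra.
  - intros t Ht. apply Fr. lra.
Qed.

Lemma A_INR A : is_subring A -> forall n, A (INR n).
Proof.
  intros HA n. pose proof (sub0 A HA) as H0. destruct HA as (H1&Hp&Hn&Hm).
  induction n. exact H0. rewrite S_INR. auto.
Qed.

Lemma A_IZR A : is_subring A -> forall z, A (IZR z).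
Proof.
  intros HA z. pose proof (A_INR A HA) as HN. destruct (HA) as (H1&Hp&Hn&Hm).
  destruct (Z_le_gt_dec 0 z).
  - rewrite <- (Z2Nat.id z) by lia. rewrite <- INR_IZR_INZ. auto.
  - replace z with (- Z.of_nat (Z.to_nat (- z)))%Z by lia.
    rewrite opp_IZR, <- INR_IZR_INZ. auto.
Qed.

Lemma fixPA A (HA : is_subring A) al k u :
  A al -> A k -> al > 2 -> u*u - al*u + 1 = 0 -> P_A A (k + u).
Proof.
  intros Hal Hk H2 Hu. destruct HA as (H1&Hp&Hn&Hm).
  exists (al + k), (- ((al+k)*k + 1)), 1, (-k).
  assert (u <> 0) by (intro; subst; lra).
  split; [|split].
  - repeat split; auto. ring.
  - replace (al + k + - k) with al by ring. rewrite Rabs_right; lra.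
  - split. replace (1*(k+u) + -k) with u by ring. auto.
    replace (1*(k+u) + -k) with u by ring.
    replace ((al + k) * (k + u) + - ((al + k) * k + 1)) with ((k+u)*u) by nra.
    field. auto.
Qed.

Definition sm q := (q - sqrt (q*q - 4)) / 2.
Definition lg q := (q + sqrt (q*q - 4)) / 2.

Lemma sq_facts q : q > 2 -> let S := sqrt (q*q-4) in 0 <= S /\ S*S = q*q-4 /\ S < q.
Proof.
  intros Hq S. assert (0 <= q*q-4) by nra.
  assert (HS : S*S = q*q-4) by (apply sqrt_sqrt; auto).
  assert (0 <= S) by apply sqrt_pos.
  repeat split; auto. nra.
Qed.

Lemma sm_root q : q > 2 -> sm q * sm q - q * sm q + 1 = 0 /\ 0 < sm q < q.
Proof. intros Hq. destruct (sq_facts q Hq) as (H1&H2&H3). unfold sm. split. nra. split; nra. Qed.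
Lemma lg_root q : q > 2 -> lg q * lg q - q * lg q + 1 = 0 /\ 0 < lg q < q.
Proof. intros Hq. destruct (sq_facts q Hq) as (H1&H2&H3). unfold lg. split. nra. split; try nra.
Qed.

Lemma lg_mono q s : 2 < q < s -> lg q < lg s.
Proof.
  intros Hq. destruct (sq_facts q ltac:(lra)) as (H1&H2&H3). destruct (sq_facts s ltac:(lra)) as (G1&G2&G3).
  unfold lg. assert (sqrt (q*q-4) < sqrt (s*s-4)) by (apply sqrt_lt_1; nra). lra.
Qed.
Lemma sm_mono q s : 2 < q < s -> sm s < sm q.
Proof.
  intros Hq. destruct (sq_facts q ltac:(lra)) as (H1&H2&H3). destruct (sq_facts s ltac:(lra)) as (G1&G2&G3).
  unfold sm. set (B := sqrt (q*q-4)) in *. set (C := sqrt (s*s-4)) in *.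
  assert (C - B > s - q) by nra. lra.
Qed.

Theorem mainTheorem12 (A : R -> Prop) (HA : is_subring A) (r p : R) (Hr : A r) :
  exists f : R -> R, in_H A f /\
    (exists y, y < p /\ forall t, t < y -> f t = t) /\
    (forall t, p < t -> f t = t + r).
Proof.
  pose proof (sub0 A HA) as H0. pose proof (A_IZR A HA) as HZ.
  destruct (Req_dec r 0) as [Hr0|Hr0].
  { subst r. exists (fun t => t). split; [split|split].
    - split; [|split]. intros x. apply (lip_cont _ 1). lra. intros; lra.
      intros; lra. intros v; exists v; reflexivity.
    - exists 0%nat, (fun _ => 0). split; [|split]; intros i Hi; try lia.
      exists 1, 0, 0, 1. split. destruct HA as (H1&_). repeat split; auto; ring.
      intros x _. split. lra. field.
    - exists (p - 1). split. lra. auto.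
    - intros; ring. }
  set (s := IZR (up (Rabs r)) + 3).
  destruct (archimed (Rabs r)) as [Hu1 Hu2].
  assert (Hs : s > Rabs r + 3) by (unfold s; lra).
  set (q := s - r).
  assert (Hq : q > 2) by (unfold q; pose proof (Rle_abs r); lra).
  assert (Hs2 : s > 2) by (pose proof (Rabs_pos r); lra).
  set (k := IZR (up (p - s - Rabs r)) - 2).
  destruct (archimed (p - s - Rabs r)) as [Hk1 Hk2].
  assert (Hk : k <= p - s - Rabs r - 1) by (unfold k; lra).
  destruct HA as (H1&Hp&Hn&Hm).
  assert (As : A s) by (unfold s; apply Hp; auto; apply (HZ 3%Z)).
  assert (Ak : A k) by (unfold k; apply Hp; auto; apply (HZ (-2)%Z)).
  assert (Aq : A q) by (unfold q; apply Hp; auto).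
  assert (HA : is_subring A) by (repeat split; auto).
  assert (HM : SL2 A (s + k) (- ((s+k)*k + 1)) 1 (-k)).
  { repeat split; auto. ring. }
  assert (qs : q <= s + Rabs r) by (unfold q; pose proof (Rle_abs (-r)); rewrite Rabs_Ropp in *; lra).
  assert (Gen : forall u w, u*u - s*u + 1 = 0 -> w*w - q*w + 1 = 0 -> 0 < u -> u < w -> w < s + Rabs r ->
     exists f : R -> R, in_H A f /\
    (exists y, y < p /\ forall t, t < y -> f t = t) /\
    (forall t, p < t -> f t = t + r)).
  { intros u w Hu Hw Hu0 Huw Hws.
    apply (core A HA r p (k+u) (k+w) (s+k) (- ((s+k)*k + 1)) 1 (-k)); auto.
    - apply (fixPA A HA s k u); auto.
    - apply (fixPA A HA q k w); auto.
    - lra.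
    - lra.
    - intros t Ht. lra.
    - replace (1*(k+u) + -k) with u by ring.
      replace ((s + k) * (k + u) + - ((s + k) * k + 1)) with ((k+u)*u).
      2:{ enough (E : (s + k) * (k + u) + - ((s + k) * k + 1) - (k+u)*u = 0) by lra.
          replace ((s + k) * (k + u) + - ((s + k) * k + 1) - (k+u)*u) with (- (u*u - s*u + 1)) by ring. lra. }
      field. lra.
    - replace (1*(k+w) + -k) with w by ring.
      replace ((s + k) * (k + w) + - ((s + k) * k + 1)) with ((k+w+r)*w).
      2:{ unfold q in Hw. enough (E : (s + k) * (k + w) + - ((s + k) * k + 1) - (k+w+r)*w = 0) by lra.
          replace ((s + k) * (k + w) + - ((s + k) * k + 1) - (k+w+r)*w) with (- (w*w - (s-r)*w + 1)) by ring. lra. }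
      field. lra. }
  destruct (Rlt_dec 0 r).
  - destruct (sm_root s Hs2) as [Ru Bu]. destruct (sm_root q Hq) as [Rw Bw].
    assert (sm s < sm q) by (apply (sm_mono q s); unfold q in *; lra).
    apply (Gen (sm s) (sm q)); auto; lra.
  - destruct (lg_root s Hs2) as [Ru Bu]. destruct (lg_root q Hq) as [Rw Bw].
    assert (lg s < lg q) by (apply (lg_mono s q); unfold q in *; lra).
    apply (Gen (lg s) (lg q)); auto; lra.
Qed.
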